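(* Let $k$ be a field, $Q=k[x,y,z]$, $I\subseteq Q$ a nonzero monomial ideal contained in $(x,y,z)^2$, and $R=Q/I$. Then for every $1\le p\le 3-\operatorname{depth}(R)$, the Koszul homology $H_p(K^R)$ has a $k$-basis consisting of classes of cycles of the form $\overline{u}\,e_{x_{i_1}\cdots x_{i_p}}$, where $\{x_{i_1},\dots,x_{i_p}\}\subseteq\{x,y,z\}$ and $u\in I:(x_{i_1},\dots,x_{i_p})$ is a monomial, $\overline u$ denoting its residue class in $R$.
   Context: $K^R=R\otimes_Q K^Q$ is the Koszul complex of $R$ on the variables, realized as the exterior algebra on a free $R$-module with basis $e_x,e_y,e_z$ (variables ordered $x<y<z$); $e_{x_{i_1}\cdots x_{i_p}}=e_{x_{i_1}}\wedge\cdots\wedge e_{x_{i_p}}$ for $i_1<\dots<i_p$, and $\partial(e_{x_{i_1}\cdots x_{i_p}})=\sum_{j}(-1)^{j-1}x_{i_j}e_{x_{i_1}\cdots\widehat{x_{i_j}}\cdots x_{i_p}}$. $H_p(K^R)$ is its $p$-th homology. *)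

(* Defs.v *)
From HB Require Import structures.
From mathcomp Require Import all_boot all_order all_algebra.
From mathcomp Require Import mpoly.

Set Implicit Arguments.
Unset Strict Implicit.
Unset Printing Implicit Defensive.
Import GRing.Theory.
Local Open Scope ring_scope.

(* Q = k[x,y,z] is {mpoly k[3]}; the variables x<y<z are 'X_0, 'X_1, 'X_2. *)

Definition ideal_gen (k : fieldType) (s : seq {mpoly k[3]}) (f : {mpoly k[3]}) : Prop :=
  exists c : 'I_(size s) -> {mpoly k[3]}, f = \sum_(i < size s) c i * s`_i.

Definition mon_gens (k : fieldType) (G : seq 'X_{1..3}) : seq {mpoly k[3]} :=
  [seq 'X_[m] | m <- G].

Definition var_gens (k : fieldType) : seq {mpoly k[3]} :=
  [seq 'X_i | i <- enum 'I_3].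

Definition msq_gens (k : fieldType) : seq {mpoly k[3]} :=
  [seq 'X_i * 'X_j | i <- enum 'I_3, j <- enum 'I_3].

Definition subset_gens (k : fieldType) (S : {set 'I_3}) : seq {mpoly k[3]} :=
  [seq 'X_i | i <- enum S].

(* Chains of the Koszul complex K^Q (lifts of chains of K^R = R (x) K^Q):
   a chain is f : {set 'I_3} -> Q, f S being the coefficient of e_S. *)
Definition chain (k : fieldType) := {set 'I_3} -> {mpoly k[3]}.

(* Koszul differential:
   d(e_S) = sum_j (-1)^(j-1) x_{i_j} e_{S \ i_j}; hence the coefficient of
   e_T in d f is sum_{i notin T} (-1)^{#{l in T | l < i}} x_i f(T u {i}). *)
Definition koszul_d (k : fieldType) (f : chain k) : chain k :=
  fun T => \sum_(i < 3 | i \notin T)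
             (-1) ^+ #|[set l in T | (val l < val i)%N]| * 'X_i * f (i |: T).

Definition chain_deg (k : fieldType) (p : nat) (f : chain k) : Prop :=
  forall S : {set 'I_3}, #|S| <> p -> f S = 0.

(* p-cycles of K^R = K^Q / I K^Q, represented by lifts to K^Q *)
Definition is_cycle (k : fieldType) (G : seq 'X_{1..3}) (p : nat) (f : chain k) : Prop :=
  chain_deg p f /\ forall T, ideal_gen (mon_gens k G) (koszul_d f T).

Definition is_boundary (k : fieldType) (G : seq 'X_{1..3}) (p : nat) (f : chain k) : Prop :=
  chain_deg p f /\
  exists g : chain k, chain_deg p.+1 g /\
    forall T, ideal_gen (mon_gens k G) (f T - koszul_d g T).

Definition is_regular_seq (k : fieldType) (G : seq 'X_{1..3}) (f : seq {mpoly k[3]}) : Prop :=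
  (forall i, (i < size f)%N -> ideal_gen (var_gens k) f`_i) /\
  (forall i, (i < size f)%N -> forall g,
      ideal_gen (mon_gens k G ++ take i f) (f`_i * g) ->
      ideal_gen (mon_gens k G ++ take i f) g) /\
  ~ ideal_gen (mon_gens k G ++ f) 1.

Definition is_depth (k : fieldType) (G : seq 'X_{1..3}) (d : nat) : Prop :=
  (exists f : seq {mpoly k[3]}, size f = d /\ is_regular_seq G f) /\
  ~ (exists f : seq {mpoly k[3]}, size f = d.+1 /\ is_regular_seq G f).

Definition comb (k : fieldType) (n : nat) (S : 'I_n -> {set 'I_3})
  (m : 'I_n -> 'X_{1..3}) (c : 'I_n -> k) : chain k :=
  fun T => \sum_(j < n) c j *: (if T == S j then 'X_[m j] else 0).

(* Main.v *)
Require Import Defs.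
From HB Require Import structures.
From mathcomp Require Import all_boot all_order all_algebra.
From mathcomp Require Import mpoly.
From mathcomp Require Import zify.
Set Implicit Arguments.
Unset Strict Implicit.
Unset Printing Implicit Defensive.
Import GRing.Theory.
Local Open Scope ring_scope.
Definition table : seq (seq bool * nat * seq nat * seq (nat * nat * nat * int)) := [::
  ([:: false; false; false; false; false; false; false; false], 1, [:: ], [:: ]);
  ([:: false; false; false; false; false; false; false; false], 2, [:: ], [:: ]);
  ([:: false; false; false; false; false; false; false; false], 3, [:: ], [:: ]);
  ([:: true; false; false; false; false; false; false; false], 1, [:: ], [:: ]);
  ([:: true; false; false; false; false; false; false; false], 2, [:: ], [:: ]);
  ([:: true; false; false; false; false; false; false; false], 3, [:: ], [:: ]);
  ([:: false; true; false; false; false; false; false; false], 1, [:: 1], [:: (0, 1, 1, Posz 1); (3, 1, 1, Posz 1)]);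
  ([:: false; true; false; false; false; false; false; false], 2, [:: ], [:: ]);
  ([:: false; true; false; false; false; false; false; false], 3, [:: ], [:: ]);
  ([:: true; true; false; false; false; false; false; false], 1, [:: ], [:: (2, 1, 0, Posz 1)]);
  ([:: true; true; false; false; false; false; false; false], 2, [:: ], [:: ]);
  ([:: true; true; false; false; false; false; false; false], 3, [:: ], [:: ]);
  ([:: false; false; true; false; false; false; false; false], 1, [:: 2], [:: (0, 2, 2, Posz 1); (3, 2, 2, Posz 1)]);
  ([:: false; false; true; false; false; false; false; false], 2, [:: ], [:: ]);
  ([:: false; false; true; false; false; false; false; false], 3, [:: ], [:: ]);
  ([:: true; false; true; false; false; false; false; false], 1, [:: ], [:: (2, 2, 0, Posz 1)]);
  ([:: true; false; true; false; false; false; false; false], 2, [:: ], [:: ]);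
  ([:: true; false; true; false; false; false; false; false], 3, [:: ], [:: ]);
  ([:: false; false; false; true; false; false; false; false], 1, [:: ], [:: ]);
  ([:: false; false; false; true; false; false; false; false], 2, [:: 3], [:: (0, 3, 3, Posz 1); (3, 3, 3, Posz 1)]);
  ([:: false; false; false; true; false; false; false; false], 3, [:: ], [:: ]);
  ([:: false; true; false; true; false; false; false; false], 1, [:: ], [:: (1, 3, 1, Negz 0)]);
  ([:: false; true; false; true; false; false; false; false], 2, [:: ], [:: (2, 3, 1, Negz 0)]);
  ([:: false; true; false; true; false; false; false; false], 3, [:: ], [:: ]);
  ([:: false; false; true; true; false; false; false; false], 1, [:: ], [:: (1, 3, 2, Posz 1)]);
  ([:: false; false; true; true; false; false; false; false], 2, [:: ], [:: (2, 3, 2, Posz 1)]);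
  ([:: false; false; true; true; false; false; false; false], 3, [:: ], [:: ]);
  ([:: false; true; true; true; false; false; false; false], 1, [:: 1], [:: (0, 1, 1, Posz 1); (0, 1, 2, Posz 1); (1, 3, 2, Posz 1); (3, 1, 1, Posz 1); (3, 1, 2, Posz 1)]);
  ([:: false; true; true; true; false; false; false; false], 2, [:: ], [:: (2, 3, 1, Negz 0)]);
  ([:: false; true; true; true; false; false; false; false], 3, [:: ], [:: ]);
  ([:: true; true; true; true; false; false; false; false], 1, [:: ], [:: (1, 3, 2, Posz 1); (2, 1, 0, Posz 1)]);
  ([:: true; true; true; true; false; false; false; false], 2, [:: ], [:: (2, 3, 1, Negz 0)]);
  ([:: true; true; true; true; false; false; false; false], 3, [:: ], [:: ]);
  ([:: false; false; false; false; true; false; false; false], 1, [:: 4], [:: (0, 4, 4, Posz 1); (3, 4, 4, Posz 1)]);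
  ([:: false; false; false; false; true; false; false; false], 2, [:: ], [:: ]);
  ([:: false; false; false; false; true; false; false; false], 3, [:: ], [:: ]);
  ([:: true; false; false; false; true; false; false; false], 1, [:: ], [:: (2, 4, 0, Posz 1)]);
  ([:: true; false; false; false; true; false; false; false], 2, [:: ], [:: ]);
  ([:: true; false; false; false; true; false; false; false], 3, [:: ], [:: ]);
  ([:: false; false; false; false; false; true; false; false], 1, [:: ], [:: ]);
  ([:: false; false; false; false; false; true; false; false], 2, [:: 5], [:: (0, 5, 5, Posz 1); (3, 5, 5, Posz 1)]);
  ([:: false; false; false; false; false; true; false; false], 3, [:: ], [:: ]);
  ([:: false; true; false; false; false; true; false; false], 1, [:: ], [:: (1, 5, 1, Negz 0)]);
  ([:: false; true; false; false; false; true; false; false], 2, [:: ], [:: (2, 5, 1, Negz 0)]);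
  ([:: false; true; false; false; false; true; false; false], 3, [:: ], [:: ]);
  ([:: false; false; false; false; true; true; false; false], 1, [:: ], [:: (1, 5, 4, Posz 1)]);
  ([:: false; false; false; false; true; true; false; false], 2, [:: ], [:: (2, 5, 4, Posz 1)]);
  ([:: false; false; false; false; true; true; false; false], 3, [:: ], [:: ]);
  ([:: false; true; false; false; true; true; false; false], 1, [:: 1], [:: (0, 1, 1, Posz 1); (0, 1, 4, Posz 1); (1, 5, 4, Posz 1); (3, 1, 1, Posz 1); (3, 1, 4, Posz 1)]);
  ([:: false; true; false; false; true; true; false; false], 2, [:: ], [:: (2, 5, 1, Negz 0)]);
  ([:: false; true; false; false; true; true; false; false], 3, [:: ], [:: ]);
  ([:: true; true; false; false; true; true; false; false], 1, [:: ], [:: (1, 5, 4, Posz 1); (2, 1, 0, Posz 1)]);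
  ([:: true; true; false; false; true; true; false; false], 2, [:: ], [:: (2, 5, 1, Negz 0)]);
  ([:: true; true; false; false; true; true; false; false], 3, [:: ], [:: ]);
  ([:: false; false; false; false; false; false; true; false], 1, [:: ], [:: ]);
  ([:: false; false; false; false; false; false; true; false], 2, [:: 6], [:: (0, 6, 6, Posz 1); (3, 6, 6, Posz 1)]);
  ([:: false; false; false; false; false; false; true; false], 3, [:: ], [:: ]);
  ([:: false; false; true; false; false; false; true; false], 1, [:: ], [:: (1, 6, 2, Negz 0)]);
  ([:: false; false; true; false; false; false; true; false], 2, [:: ], [:: (2, 6, 2, Negz 0)]);
  ([:: false; false; true; false; false; false; true; false], 3, [:: ], [:: ]);
  ([:: false; false; false; false; true; false; true; false], 1, [:: ], [:: (1, 6, 4, Posz 1)]);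
  ([:: false; false; false; false; true; false; true; false], 2, [:: ], [:: (2, 6, 4, Posz 1)]);
  ([:: false; false; false; false; true; false; true; false], 3, [:: ], [:: ]);
  ([:: false; false; true; false; true; false; true; false], 1, [:: 2], [:: (0, 2, 2, Posz 1); (0, 2, 4, Posz 1); (1, 6, 4, Posz 1); (3, 2, 2, Posz 1); (3, 2, 4, Posz 1)]);
  ([:: false; false; true; false; true; false; true; false], 2, [:: ], [:: (2, 6, 2, Negz 0)]);
  ([:: false; false; true; false; true; false; true; false], 3, [:: ], [:: ]);
  ([:: true; false; true; false; true; false; true; false], 1, [:: ], [:: (1, 6, 4, Posz 1); (2, 2, 0, Posz 1)]);
  ([:: true; false; true; false; true; false; true; false], 2, [:: ], [:: (2, 6, 2, Negz 0)]);
  ([:: true; false; true; false; true; false; true; false], 3, [:: ], [:: ]);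
  ([:: false; false; false; false; false; false; false; true], 1, [:: ], [:: ]);
  ([:: false; false; false; false; false; false; false; true], 2, [:: ], [:: ]);
  ([:: false; false; false; false; false; false; false; true], 3, [:: 7], [:: (0, 7, 7, Posz 1); (3, 7, 7, Posz 1)]);
  ([:: false; false; false; true; false; false; false; true], 1, [:: ], [:: ]);
  ([:: false; false; false; true; false; false; false; true], 2, [:: ], [:: (1, 7, 3, Posz 1)]);
  ([:: false; false; false; true; false; false; false; true], 3, [:: ], [:: (2, 7, 3, Posz 1)]);
  ([:: false; false; false; false; false; true; false; true], 1, [:: ], [:: ]);
  ([:: false; false; false; false; false; true; false; true], 2, [:: ], [:: (1, 7, 5, Negz 0)]);
  ([:: false; false; false; false; false; true; false; true], 3, [:: ], [:: (2, 7, 5, Negz 0)]);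
  ([:: false; false; false; true; false; true; false; true], 1, [:: ], [:: ]);
  ([:: false; false; false; true; false; true; false; true], 2, [:: 3], [:: (0, 3, 3, Posz 1); (0, 3, 5, Posz 1); (1, 7, 5, Negz 0); (3, 3, 3, Posz 1); (3, 3, 5, Posz 1)]);
  ([:: false; false; false; true; false; true; false; true], 3, [:: ], [:: (2, 7, 3, Posz 1)]);
  ([:: false; true; false; true; false; true; false; true], 1, [:: ], [:: (1, 3, 1, Negz 0)]);
  ([:: false; true; false; true; false; true; false; true], 2, [:: ], [:: (1, 7, 5, Negz 0); (2, 3, 1, Negz 0)]);
  ([:: false; true; false; true; false; true; false; true], 3, [:: ], [:: (2, 7, 3, Posz 1)]);
  ([:: false; false; false; false; false; false; true; true], 1, [:: ], [:: ]);
  ([:: false; false; false; false; false; false; true; true], 2, [:: ], [:: (1, 7, 6, Posz 1)]);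
  ([:: false; false; false; false; false; false; true; true], 3, [:: ], [:: (2, 7, 6, Posz 1)]);
  ([:: false; false; false; true; false; false; true; true], 1, [:: ], [:: ]);
  ([:: false; false; false; true; false; false; true; true], 2, [:: 3], [:: (0, 3, 3, Posz 1); (0, 3, 6, Negz 0); (1, 7, 6, Posz 1); (3, 3, 3, Posz 1); (3, 3, 6, Negz 0)]);
  ([:: false; false; false; true; false; false; true; true], 3, [:: ], [:: (2, 7, 3, Posz 1)]);
  ([:: false; false; true; true; false; false; true; true], 1, [:: ], [:: (1, 3, 2, Posz 1)]);
  ([:: false; false; true; true; false; false; true; true], 2, [:: ], [:: (1, 7, 6, Posz 1); (2, 3, 2, Posz 1)]);
  ([:: false; false; true; true; false; false; true; true], 3, [:: ], [:: (2, 7, 3, Posz 1)]);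
  ([:: false; false; false; false; false; true; true; true], 1, [:: ], [:: ]);
  ([:: false; false; false; false; false; true; true; true], 2, [:: 5], [:: (0, 5, 5, Posz 1); (0, 5, 6, Posz 1); (1, 7, 6, Posz 1); (3, 5, 5, Posz 1); (3, 5, 6, Posz 1)]);
  ([:: false; false; false; false; false; true; true; true], 3, [:: ], [:: (2, 7, 5, Negz 0)]);
  ([:: false; false; false; true; false; true; true; true], 1, [:: ], [:: ]);
  ([:: false; false; false; true; false; true; true; true], 2, [:: 3; 5], [:: (0, 3, 3, Posz 1); (0, 3, 6, Negz 0); (0, 5, 5, Posz 1); (0, 5, 6, Posz 1); (1, 7, 6, Posz 1); (3, 3, 3, Posz 1); (3, 3, 6, Negz 0); (3, 5, 5, Posz 1); (3, 5, 6, Posz 1)]);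
  ([:: false; false; false; true; false; true; true; true], 3, [:: ], [:: (2, 7, 3, Posz 1)]);
  ([:: false; true; false; true; false; true; true; true], 1, [:: ], [:: (1, 3, 1, Negz 0)]);
  ([:: false; true; false; true; false; true; true; true], 2, [:: 6], [:: (0, 6, 5, Posz 1); (0, 6, 6, Posz 1); (1, 7, 5, Negz 0); (2, 3, 1, Negz 0); (3, 6, 3, Negz 0); (3, 6, 6, Posz 1)]);
  ([:: false; true; false; true; false; true; true; true], 3, [:: ], [:: (2, 7, 3, Posz 1)]);
  ([:: false; false; true; true; false; true; true; true], 1, [:: ], [:: (1, 3, 2, Posz 1)]);
  ([:: false; false; true; true; false; true; true; true], 2, [:: 5], [:: (0, 5, 5, Posz 1); (0, 5, 6, Posz 1); (1, 7, 6, Posz 1); (2, 3, 2, Posz 1); (3, 5, 3, Posz 1); (3, 5, 5, Posz 1)]);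
  ([:: false; false; true; true; false; true; true; true], 3, [:: ], [:: (2, 7, 3, Posz 1)]);
  ([:: false; true; true; true; false; true; true; true], 1, [:: ], [:: (1, 3, 2, Posz 1); (1, 5, 1, Negz 0); (1, 5, 2, Negz 0)]);
  ([:: false; true; true; true; false; true; true; true], 2, [:: ], [:: (1, 7, 6, Posz 1); (2, 3, 2, Posz 1); (2, 5, 1, Negz 0); (2, 5, 2, Negz 0)]);
  ([:: false; true; true; true; false; true; true; true], 3, [:: ], [:: (2, 7, 3, Posz 1)]);
  ([:: false; false; false; false; true; true; true; true], 1, [:: ], [:: (1, 5, 4, Posz 1)]);
  ([:: false; false; false; false; true; true; true; true], 2, [:: ], [:: (1, 7, 6, Posz 1); (2, 5, 4, Posz 1)]);
  ([:: false; false; false; false; true; true; true; true], 3, [:: ], [:: (2, 7, 5, Negz 0)]);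
  ([:: false; false; false; true; true; true; true; true], 1, [:: ], [:: (1, 5, 4, Posz 1)]);
  ([:: false; false; false; true; true; true; true; true], 2, [:: 3], [:: (0, 3, 3, Posz 1); (0, 3, 6, Negz 0); (1, 7, 6, Posz 1); (2, 5, 4, Posz 1); (3, 3, 3, Posz 1); (3, 3, 5, Posz 1)]);
  ([:: false; false; false; true; true; true; true; true], 3, [:: ], [:: (2, 7, 3, Posz 1)]);
  ([:: false; true; false; true; true; true; true; true], 1, [:: ], [:: (1, 3, 1, Negz 0); (1, 3, 4, Negz 0); (1, 5, 4, Posz 1)]);
  ([:: false; true; false; true; true; true; true; true], 2, [:: ], [:: (1, 7, 6, Posz 1); (2, 3, 1, Negz 0); (2, 3, 4, Negz 0); (2, 5, 4, Posz 1)]);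
  ([:: false; true; false; true; true; true; true; true], 3, [:: ], [:: (2, 7, 3, Posz 1)]);
  ([:: false; false; true; true; true; true; true; true], 1, [:: ], [:: (1, 3, 2, Posz 1); (1, 5, 4, Posz 1)]);
  ([:: false; false; true; true; true; true; true; true], 2, [:: ], [:: (1, 7, 6, Posz 1); (2, 3, 2, Posz 1); (2, 5, 4, Posz 1)]);
  ([:: false; false; true; true; true; true; true; true], 3, [:: ], [:: (2, 7, 3, Posz 1)]);
  ([:: false; true; true; true; true; true; true; true], 1, [:: 1], [:: (0, 1, 1, Posz 1); (0, 1, 2, Posz 1); (0, 1, 4, Posz 1); (1, 3, 2, Posz 1); (1, 5, 4, Posz 1); (3, 1, 1, Posz 1); (3, 1, 2, Posz 1); (3, 1, 4, Posz 1)]);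
  ([:: false; true; true; true; true; true; true; true], 2, [:: ], [:: (1, 7, 6, Posz 1); (2, 3, 2, Posz 1); (2, 5, 1, Negz 0); (2, 5, 2, Negz 0)]);
  ([:: false; true; true; true; true; true; true; true], 3, [:: ], [:: (2, 7, 3, Posz 1)]);
  ([:: true; true; true; true; true; true; true; true], 1, [:: ], [:: (1, 3, 2, Posz 1); (1, 5, 4, Posz 1); (2, 1, 0, Posz 1)]);
  ([:: true; true; true; true; true; true; true; true], 2, [:: ], [:: (1, 7, 6, Posz 1); (2, 3, 2, Posz 1); (2, 5, 1, Negz 0); (2, 5, 2, Negz 0)]);
  ([:: true; true; true; true; true; true; true; true], 3, [:: ], [:: (2, 7, 3, Posz 1)])].

Definition bit (n i : nat) : bool := odd (n %/ 2 ^ i).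
Definition cnt (t i : nat) : nat := count (bit t) (iota 0 i).
Definition pc (s : nat) : nat := count (bit s) (iota 0 3).
Definition Dg {R : pzRingType} (h : nat -> R) (t : nat) : R :=
  foldr (fun i acc => (if bit t i then 0 else (-1) ^+ cnt t i * h (t + 2 ^ i)%N) + acc) 0 (iota 0 3).
Definition sum8 {R : nmodType} (F : nat -> R) : R := foldr (fun u acc => F u + acc) 0 (iota 0 8).
Definition all8 (P : nat -> bool) := all P (iota 0 8).
Definition nthD (l : seq bool) (s : nat) : bool := nth false l s.
Definition subb (s u : nat) : bool := all (fun i => bit s i ==> bit u i) (iota 0 3).
Definition validc (D : nat -> bool) : bool :=
  has (fun T => all8 (fun s => D s ==> subb s T) &&
                all8 (fun s => all8 (fun u => D s && subb s u && subb u T ==> D u))) (iota 0 8).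
Definition lookup (D : nat -> bool) (p : nat) : seq nat * seq (nat * nat * nat * int) :=
  let k := map D (iota 0 8) in
  match [seq e <- table | (e.1.1.1 == k) && (e.1.1.2 == p)] with
  | e :: _ => (e.1.2, e.2) | [::] => ([::], [::]) end.
Definition certB D p : seq nat := (lookup D p).1.
Definition cve (E : seq (nat * nat * nat * int)) (kd s u : nat) : int :=
  foldr (fun e acc => if (e.1.1.1 == kd) && (e.1.1.2 == s) && (e.1.2 == u) then e.2 + acc else acc)
    0 E.
Definition cv D p := cve (lookup D p).2.
Definition Dp (D : nat -> bool) (p s : nat) : bool := D s && (pc s == p).
Definition certok (D : nat -> bool) (p : nat) : bool :=
  let B := certB D p in let E := (lookup D p).2 in
  [&& uniq B,
   all (fun s => (s < 8)%N && Dp D p s && all (fun i => bit s i ==> ~~ D (s - 2 ^ i)%N) (iota 0 3)) B,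
   all8 (fun s => all8 (fun u => (cve E 0 s u != 0) ==> (s \in B) && Dp D p u)),
   all8 (fun v => all8 (fun u => (cve E 1 v u != 0) ==> Dp D p.+1 v && Dp D p u)),
   all8 (fun s => all8 (fun t => (cve E 2 s t != 0) ==> Dp D p.-1 t)),
   all8 (fun s => all8 (fun u => (cve E 3 s u != 0) ==> (s \in B) && Dp D p u)),
   all8 (fun s => all8 (fun u => Dp D p s && Dp D p u ==>
      ((s == u)%:Z == cve E 0 s u + Dg (fun v => cve E 1 v u) s
          + sum8 (fun t => cve E 2 s t * Dg (fun v => (v == u)%:Z) t)))),
   all (fun s => all (fun u => cve E 3 s u == (s == u)%:Z) B) B,
   all (fun s => all8 (fun v => Dp D p.+1 v ==>
        (sum8 (fun u => cve E 3 s u * Dg (fun w => (w == v)%:Z) u) == 0))) B &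
   has (fun j => all8 (fun s => bit s j || (D s == D (s + 2 ^ j)%N))) (iota 0 3) ==> (B == [::])].
Fixpoint allbl (n : nat) : seq (seq bool) :=
  if n is n'.+1 then [seq b :: l | b <- [:: true; false], l <- allbl n'] else [:: [::]].
Definition allcheck : bool :=
  all (fun l => validc (nthD l) ==> all (certok (nthD l)) [:: 1; 2; 3]%N) (allbl 8).


Lemma allcheckP : allcheck = true.
Proof. vm_compute. reflexivity. Qed.


Definition ST := {set 'I_3}.
Definition sset (n : nat) : ST := [set i : 'I_3 | bit n i].
Definition code (S : ST) : nat := (\sum_(i < 3) (i \in S) * 2 ^ i)%N.

Ltac cas8 s := do 8?[case: s => [|s]].
Lemma sset_mem n i : (i \in sset n) = bit n i.
Proof. by rewrite inE. Qed.

Lemma card3 (A : ST) : #|A| = (\sum_(i < 3) (i \in A))%N.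
Proof. rewrite -sum1_card big_mkcond /=; apply: eq_bigr => i _; by case: (i \in A). Qed.

Lemma ord3P (P : 'I_3 -> Prop) : P ord0 -> P (lift ord0 ord0) -> P (lift ord0 (lift ord0 ord0)) -> forall j, P j.
Proof.
move=> H0 H1 H2 [[|[|[|//]]] Hj].
- by have -> : Ordinal Hj = ord0 by apply/val_inj.
- by have -> : Ordinal Hj = lift ord0 ord0 by apply/val_inj.
- by have -> : Ordinal Hj = lift ord0 (lift ord0 ord0) by apply/val_inj.
Qed.

Lemma bitsum (P : 'I_3 -> bool) (j : 'I_3) : bit (\sum_(i<3) P i * 2^i) j = P j.
Proof.
rewrite !big_ord_recl big_ord0 /=.
by elim/ord3P: j; case: (P ord0); case: (P (lift ord0 ord0)); case: (P (lift ord0 (lift ord0 ord0))).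
Qed.

Lemma code_lt S : (code S < 8)%N.
Proof.
rewrite /code !big_ord_recl big_ord0 /=.
by case: (ord0 \in S); case: (lift ord0 ord0 \in S); case: (lift ord0 (lift ord0 ord0) \in S).
Qed.

Lemma codeK S : sset (code S) = S.
Proof. by apply/setP => j; rewrite inE bitsum. Qed.

Lemma ssetK s : (s < 8)%N -> code (sset s) = s.
Proof.
move=> hs; rewrite /code !big_ord_recl big_ord0 /= !inE.
by case: s hs => [|[|[|[|[|[|[|[|s]]]]]]]].
Qed.

Lemma card_sset s : (s < 8)%N -> #|sset s| = pc s.
Proof.
move=> hs; rewrite card3 !big_ord_recl big_ord0 /= !inE.
by case: s hs => [|[|[|[|[|[|[|[|s]]]]]]]].
Qed.

Lemma cnt_card t (i : 'I_3) : (t < 8)%N -> #|[set l in sset t | (val l < val i)%N]| = cnt t i.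
Proof.
move=> ht; rewrite card3 !big_ord_recl big_ord0 /= !inE.
by elim/ord3P: i; case: t ht => [|[|[|[|[|[|[|[|s]]]]]]]].
Qed.

Lemma sset_add s (i : 'I_3) : (s < 8)%N -> ~~ bit s i ->
  ((s + 2 ^ i) < 8)%N /\ sset (s + 2 ^ i) = i |: sset s.
Proof.
move=> hs; elim/ord3P: i; case: s hs => [|[|[|[|[|[|[|[|s]]]]]]]] //= _ _;
  split=> //; apply/setP => j; rewrite !inE; by elim/ord3P: j.
Qed.

Lemma sset_sub s (i : 'I_3) : (s < 8)%N -> bit s i ->
  ((s - 2 ^ i) < 8)%N /\ sset (s - 2 ^ i) = sset s :\ i.
Proof.
move=> hs; elim/ord3P: i; case: s hs => [|[|[|[|[|[|[|[|s]]]]]]]] //= _ _;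
  split=> //; apply/setP => j; rewrite !inE; by elim/ord3P: j.
Qed.

Lemma bridge_term {R : pzRingType} (z : ST -> R) t (i : 'I_3) : (t < 8)%N ->
  (if i \notin sset t then (-1) ^+ #|[set l in sset t | (val l < val i)%N]| * z (i |: sset t) else 0)
  = (if bit t i then 0 else (-1) ^+ cnt t i * z (sset (t + 2 ^ i))).
Proof.
move=> ht; rewrite sset_mem; case: (boolP (bit t i)) => hb //=.
have [_ ->] := sset_add ht hb. by rewrite cnt_card.
Qed.

Lemma bridgeD {R : pzRingType} (z : ST -> R) t : (t < 8)%N ->
  \sum_(i < 3 | i \notin sset t) (-1) ^+ #|[set l in sset t | (val l < val i)%N]| * z (i |: sset t)
  = Dg (fun v => z (sset v)) t.
Proof.
move=> ht; rewrite big_mkcond !big_ord_recl big_ord0 /=.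
by rewrite !bridge_term // /Dg /= addr0.

Qed.


Lemma sumseqE {R : nmodType} (r : seq nat) (F : nat -> R) :
  foldr (fun u acc => F u + acc) 0 r = \sum_(u <- r) F u.
Proof. by elim: r => [|x r IH] /=; rewrite ?big_nil ?big_cons ?IH. Qed.

Lemma all8P P : all8 P -> forall s, (s < 8)%N -> P s.
Proof. by move=> /allP H s hs; apply: H; rewrite mem_iota. Qed.

Lemma add_lt8 t i : (t < 8)%N -> (i < 3)%N -> ~~ bit t i -> (t + 2 ^ i < 8)%N.
Proof.
by case: i => [|[|[|//]]]; case: t => [|[|[|[|[|[|[|[|s]]]]]]]].
Qed.

Section Local.
Variable k : fieldType.

Lemma DgE (h : nat -> k) t :
  Dg h t = \sum_(i <- iota 0 3) (if bit t i then 0 else (-1) ^+ cnt t i * h (t + 2 ^ i)%N).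
Proof. by rewrite /Dg sumseqE. Qed.

Lemma Dg_eq (h1 h2 : nat -> k) t :
  (forall i, (i < 3)%N -> ~~ bit t i -> h1 (t + 2 ^ i)%N = h2 (t + 2 ^ i)%N) -> Dg h1 t = Dg h2 t.
Proof.
move=> H; rewrite !DgE; apply: eq_big_seq => i; rewrite mem_iota => /andP[_ hi].
by case: (boolP (bit t i)) => hb //; rewrite H.
Qed.

Lemma Dg_sum (r : seq nat) (F : nat -> nat -> k) t :
  Dg (fun v => \sum_(u <- r) F u v) t = \sum_(u <- r) Dg (F u) t.
Proof.
rewrite DgE; under [RHS]eq_bigr do rewrite DgE.
rewrite exchange_big; apply: eq_bigr => i _.
case: (bit t i); first by rewrite big1.
by rewrite mulr_sumr.
Qed.

Lemma Dg_scal (F : nat -> k) c t : Dg (fun v => F v * c) t = Dg F t * c.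
Proof.
rewrite !DgE mulr_suml; apply: eq_bigr => i _.
by case: (bit t i); rewrite ?mul0r ?mulrA.
Qed.

Lemma Dg_int (h : nat -> int) t : (Dg h t)%:~R = Dg (fun v => (h v)%:~R : k) t.
Proof.
rewrite /Dg /=.
by rewrite !intrD !(fun_if (fun x : int => x%:~R : k)) !intrM !rmorphXn /= !rmorphN1 /= ?mulr0z.
Qed.

Lemma pick8 (x : nat) (c : nat -> k) : (x < 8)%N ->
  \sum_(v <- iota 0 8) ((x == v)%:Z)%:~R * c v = c x.
Proof.
move=> hx; rewrite (bigD1_seq x) ?mem_iota ?iota_uniq //= eqxx mul1r big1 ?addr0 //.
by move=> v; rewrite eq_sym => /negbTE ->; rewrite mul0r.
Qed.

Lemma Dg_expand (z : nat -> k) t : (t < 8)%N ->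
  Dg z t = \sum_(v <- iota 0 8) (Dg (fun w => (w == v)%:Z) t)%:~R * z v.
Proof.
move=> ht.
under [RHS]eq_bigr do rewrite Dg_int -Dg_scal.
rewrite -Dg_sum; apply: Dg_eq => i hi hb.
by rewrite pick8 // add_lt8.
Qed.

End Local.

Section Lin.
Variable k : fieldType.
Lemma sum3 (r : seq nat) (a b c : nat -> int) (z : nat -> k) :
  \sum_(u <- r) (a u + b u + c u)%:~R * z u =
  \sum_(u <- r) (a u)%:~R * z u + \sum_(u <- r) (b u)%:~R * z u + \sum_(u <- r) (c u)%:~R * z u.
Proof. by rewrite -!big_split; apply: eq_bigr => u _; rewrite !intrD !mulrDl. Qed.

Lemma linD (h : nat -> nat -> int) (z : nat -> k) s :
  \sum_(u <- iota 0 8) (Dg (fun v => h v u) s)%:~R * z u =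
  Dg (fun v => \sum_(u <- iota 0 8) (h v u)%:~R * z u) s.
Proof. by rewrite Dg_sum; apply: eq_bigr => u _; rewrite Dg_int -Dg_scal. Qed.

Lemma linM (m : nat -> int) (z : nat -> k) :
  \sum_(u <- iota 0 8) (sum8 (fun t => m t * Dg (fun v => (v == u)%:Z) t))%:~R * z u =
  \sum_(t <- iota 0 8) (m t)%:~R * Dg z t.
Proof.
under eq_bigr do rewrite /sum8 sumseqE rmorph_sum mulr_suml.
rewrite exchange_big; apply: eq_big_seq => t; rewrite mem_iota /= => ht.
rewrite (Dg_expand z ht) mulr_sumr; apply: eq_bigr => u _.
by rewrite intrM mulrA.
Qed.

Lemma linL (m : nat -> int) (g : nat -> k) :
  \sum_(u <- iota 0 8) (m u)%:~R * Dg g u =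
  \sum_(v <- iota 0 8) (sum8 (fun u => m u * Dg (fun w => (w == v)%:Z) u))%:~R * g v.
Proof.
under [RHS]eq_bigr do rewrite /sum8 sumseqE rmorph_sum mulr_suml.
rewrite [RHS]exchange_big; apply: eq_big_seq => u; rewrite mem_iota /= => hu.
rewrite (Dg_expand g hu) mulr_sumr; apply: eq_bigr => v _.
by rewrite intrM mulrA.
Qed.
End Lin.


Lemma cert_uniq D p : certok D p -> uniq (certB D p).
Proof. rewrite /certok. by case/andP. Qed.

Lemma cert_B0 D p : certok D p -> all (fun s => (s < 8)%N && Dp D p s && all (fun i => bit s i ==> ~~ D (s - 2 ^ i)%N) (iota 0 3)) (certB D p).
Proof. rewrite /certok. by case/andP => _ /andP[]. Qed.

Lemma cert_C0 D p : certok D p -> all8 (fun s => all8 (fun u => (cv D p 0 s u != 0) ==> (s \in (certB D p)) && Dp D p u)).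
Proof. rewrite /certok. by case/andP => _ /andP[_ /andP[]]. Qed.
Lemma cert_H0 D p : certok D p -> all8 (fun v => all8 (fun u => (cv D p 1 v u != 0) ==> Dp D p.+1 v && Dp D p u)).
Proof. rewrite /certok. by case/andP => _ /andP[_ /andP[_ /andP[]]]. Qed.
Lemma cert_M0 D p : certok D p -> all8 (fun s => all8 (fun t => (cv D p 2 s t != 0) ==> Dp D p.-1 t)).
Proof. rewrite /certok. by case/andP => _ /andP[_ /andP[_ /andP[_ /andP[]]]]. Qed.
Lemma cert_L0 D p : certok D p -> all8 (fun s => all8 (fun u => (cv D p 3 s u != 0) ==> (s \in (certB D p)) && Dp D p u)).
Proof. rewrite /certok. by case/andP => _ /andP[_ /andP[_ /andP[_ /andP[_ /andP[]]]]]. Qed.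
Lemma cert_id0 D p : certok D p -> all8 (fun s => all8 (fun u => Dp D p s && Dp D p u ==>
      ((s == u)%:Z == cv D p 0 s u + Dg (fun v => cv D p 1 v u) s
          + sum8 (fun t => cv D p 2 s t * Dg (fun v => (v == u)%:Z) t)))).
Proof. rewrite /certok. by case/andP => _ /andP[_ /andP[_ /andP[_ /andP[_ /andP[_ /andP[]]]]]]. Qed.
Lemma cert_Ld0 D p : certok D p -> all (fun s => all (fun u => cv D p 3 s u == (s == u)%:Z) (certB D p)) (certB D p).
Proof. rewrite /certok. by case/andP => _ /andP[_ /andP[_ /andP[_ /andP[_ /andP[_ /andP[_ /andP[]]]]]]]. Qed.
Lemma cert_Lk0 D p : certok D p -> all (fun s => all8 (fun v => Dp D p.+1 v ==>
        (sum8 (fun u => cv D p 3 s u * Dg (fun w => (w == v)%:Z) u) == 0))) (certB D p).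
Proof. rewrite /certok. by case/andP => _ /andP[_ /andP[_ /andP[_ /andP[_ /andP[_ /andP[_ /andP[_ /andP[]]]]]]]]. Qed.
Lemma cert_cone0 D p : certok D p -> has (fun j => all8 (fun s => bit s j || (D s == D (s + 2 ^ j)%N))) (iota 0 3) ==> ((certB D p) == [::]).
Proof. rewrite /certok. by case/andP => _ /andP[_ /andP[_ /andP[_ /andP[_ /andP[_ /andP[_ /andP[_ /andP[]]]]]]]]. Qed.

Section Cert.
Variables (D : nat -> bool) (p : nat).
Hypothesis ok : certok D p.
Local Notation B := (certB D p).

Lemma cert_B s : s \in B ->
  [/\ (s < 8)%N, Dp D p s & forall i, (i < 3)%N -> bit s i -> ~~ D (s - 2 ^ i)%N].
Proof.
move: (cert_B0 ok) => /allP h /h /andP[/andP[h1 h2] /allP h3]; split=> // i hi hb.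
by move: (h3 i); rewrite mem_iota /= hi hb => /(_ isT).
Qed.

Lemma cert_C s u : (s < 8)%N -> (u < 8)%N -> cv D p 0 s u != 0 -> (s \in B) && Dp D p u.
Proof. by move=> hs hu; move: (all8P (all8P (cert_C0 ok) hs) hu) => /implyP. Qed.
Lemma cert_H v u : (v < 8)%N -> (u < 8)%N -> cv D p 1 v u != 0 -> Dp D p.+1 v && Dp D p u.
Proof. by move=> hs hu; move: (all8P (all8P (cert_H0 ok) hs) hu) => /implyP. Qed.
Lemma cert_M s t : (s < 8)%N -> (t < 8)%N -> cv D p 2 s t != 0 -> Dp D p.-1 t.
Proof. by move=> hs hu; move: (all8P (all8P (cert_M0 ok) hs) hu) => /implyP. Qed.
Lemma cert_L s u : (s < 8)%N -> (u < 8)%N -> cv D p 3 s u != 0 -> (s \in B) && Dp D p u.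
Proof. by move=> hs hu; move: (all8P (all8P (cert_L0 ok) hs) hu) => /implyP. Qed.
Lemma cert_id s u : (s < 8)%N -> (u < 8)%N -> Dp D p s -> Dp D p u ->
   (s == u)%:Z = cv D p 0 s u + Dg (fun v => cv D p 1 v u) s
          + sum8 (fun t => cv D p 2 s t * Dg (fun v => (v == u)%:Z) t).
Proof.
move=> hs hu h1 h2.
by move: (all8P (all8P (cert_id0 ok) hs) hu); rewrite h1 h2 => /eqP.
Qed.
Lemma cert_Ldiag s u : s \in B -> u \in B -> cv D p 3 s u = (s == u)%:Z.
Proof. by move: (cert_Ld0 ok) => /allP h /h /allP h2 /h2 /eqP. Qed.
Lemma cert_Lker s v : s \in B -> (v < 8)%N -> Dp D p.+1 v ->
  sum8 (fun u => cv D p 3 s u * Dg (fun w => (w == v)%:Z) u) = 0.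
Proof.
move: (cert_Lk0 ok) => /allP h /h hs hv hd.
by move: (all8P hs hv); rewrite hd => /eqP.
Qed.
Lemma cert_cone j : (j < 3)%N -> (forall s, (s < 8)%N -> ~~ bit s j -> D s = D (s + 2 ^ j)%N) -> B = [::].
Proof.
move: (cert_cone0 ok) => /implyP h hj H.
apply/eqP/h/hasP; exists j; first by rewrite mem_iota.
apply/allP => s; rewrite mem_iota /= => hs.
by case: (boolP (bit s j)) => //= hb; rewrite H.
Qed.
End Cert.

Lemma sum8E {R : nmodType} (F : nat -> R) : sum8 F = \sum_(u <- iota 0 8) F u.
Proof. by rewrite /sum8 sumseqE. Qed.

Section LocalLemmas.
Opaque Dg sum8.
Variable k : fieldType.
Variables (D : nat -> bool) (p : nat).
Hypothesis ok : certok D p.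
Local Notation B := (certB D p).

Definition Ck (z : nat -> k) (s : nat) : k := \sum_(u <- iota 0 8) (cv D p 0 s u)%:~R * z u.
Definition Hk (z : nat -> k) (v : nat) : k := \sum_(u <- iota 0 8) (cv D p 1 v u)%:~R * z u.

Lemma local_span (z : nat -> k) :
  (forall u, (u < 8)%N -> z u != 0 -> Dp D p u) ->
  (forall t, (t < 8)%N -> Dp D p.-1 t -> Dg z t = 0) ->
  forall s, (s < 8)%N -> Dp D p s -> z s = Ck z s + Dg (Hk z) s.
Proof.
move=> zsupp zcyc s hs hDs.
rewrite -(pick8 z hs).
transitivity (\sum_(u <- iota 0 8)
  ((cv D p 0 s u + Dg (fun v => cv D p 1 v u) s
          + sum8 (fun t => cv D p 2 s t * Dg (fun v => (v == u)%:Z) t))%:~R * z u)).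
  apply: eq_big_seq => u; rewrite mem_iota /= => hu.
  case: (eqVneq (z u) 0) => [->|nz]; first by rewrite !mulr0.
  by rewrite -cert_id // zsupp.
rewrite sum3 linD linM.
have -> : \sum_(t <- iota 0 8) (cv D p 2 s t)%:~R * Dg z t = 0.
  rewrite big1_seq // => t; rewrite mem_iota /= => ht.
  case: (eqVneq (cv D p 2 s t) 0) => [->|nz]; first by rewrite mul0r.
  by rewrite zcyc ?mulr0 // (cert_M ok hs ht nz).
by rewrite addr0.
Qed.

Lemma local_indep (c g : nat -> k) :
  (forall s, (s < 8)%N -> c s != 0 -> s \in B) ->
  (forall v, (v < 8)%N -> g v != 0 -> Dp D p.+1 v) ->
  (forall s, (s < 8)%N -> Dp D p s -> c s = Dg g s) ->
  forall s, (s < 8)%N -> c s = 0.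
Proof.
move=> csupp gsupp hb s hs.
case: (boolP (s \in B)) => sB; last first.
  by apply/eqP; apply: contraNT sB; apply: csupp.
have -> : c s = \sum_(u <- iota 0 8) (cv D p 3 s u)%:~R * c u.
  rewrite -(pick8 c hs); apply: eq_big_seq => u; rewrite mem_iota /= => hu.
  case: (eqVneq (c u) 0) => [->|nz]; first by rewrite !mulr0.
  by rewrite cert_Ldiag // csupp.
transitivity (\sum_(u <- iota 0 8) (cv D p 3 s u)%:~R * Dg g u).
  apply: eq_big_seq => u; rewrite mem_iota /= => hu.
  case: (eqVneq (cv D p 3 s u) 0) => [->|nz]; first by rewrite !mul0r.
  by case/andP: (cert_L ok hs hu nz) => _ hd; rewrite hb.
rewrite linL big1_seq // => v; rewrite mem_iota /= => hv.
case: (eqVneq (g v) 0) => [->|nz]; first by rewrite mulr0.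
by rewrite cert_Lker // ?mul0r // gsupp.
Qed.
End LocalLemmas.


Section Mono.
Variable k : fieldType.
Variable G : seq 'X_{1..3}.

Definition inI (m : 'X_{1..3}) : bool := has (fun g => (g <= m)%MM) G.

Lemma inI_mono m m' : (m <= m')%MM -> inI m -> inI m'.
Proof. by move=> h /hasP [g gG hg]; apply/hasP; exists g => //; apply: lepm_trans h. Qed.

Lemma mcoeffMXs (q : {mpoly k[3]}) m m' :
  (q * 'X_[m])@_m' = if (m <= m')%MM then q@_(m' - m) else 0.
Proof.
case: ifP => h.
  by rewrite -{1}(submK h) addmC mcoeffMX.
apply/eqP; rewrite mcoeff_eq0 (perm_mem (msuppMX q m)); apply/mapP => [[m'' _ e]].
by move: h; rewrite e lem_addr.
Qed.

Lemma size_mon_gens : size (mon_gens k G) = size G.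
Proof. by rewrite size_map. Qed.

Lemma idealP (f : {mpoly k[3]}) :
  ideal_gen (mon_gens k G) f <-> (forall m, ~~ inI m -> f@_m = 0).
Proof.
split.
  move=> [c ->] m hm; rewrite raddf_sum big1 // => i _.
  have hi : (i < size G)%N by rewrite -size_mon_gens.
  rewrite (nth_map 0%MM) // /= mcoeffMXs; case: ifP => // hle.
  by move: hm; rewrite /inI; case/hasP; exists (nth 0%MM G i) => //; apply: mem_nth.
move=> H.
have inS m : m \in msupp f -> inI m.
  by move=> hm; apply: contraTT hm => /H; rewrite mcoeff_msupp => ->; rewrite eqxx.
pose idx m := find (fun g => (g <= m)%MM) G.
exists (fun i : 'I_(size (mon_gens k G)) => \sum_(m <- msupp f | idx m == i) f@_m *: 'X_[m - nth 0%MM G i]).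
rewrite {1}(mpolyE f).
under [RHS]eq_bigr do rewrite big_mkcond mulr_suml.
rewrite exchange_big /=; apply: eq_big_seq => m hm.
have hidx : (idx m < size (mon_gens k G))%N by rewrite size_mon_gens -has_find; apply: inS.
rewrite (bigD1 (Ordinal hidx)) //= eqxx big1 ?addr0; last first.
  move=> i hi; rewrite ifF ?mul0r //; apply/negbTE; apply: contra hi => /eqP e.
  by apply/eqP/val_inj; rewrite /= e.
rewrite (nth_map 0%MM) -?size_mon_gens //= -scalerAl -mpolyXD submK //.
by have := nth_find 0%MM (inS m hm).
Qed.

Lemma ideal_mul (m : 'X_{1..3}) (S : {set 'I_3}) (g : {mpoly k[3]}) :
  (forall i, i \in S -> inI (m + U_(i))%MM) ->
  ideal_gen (subset_gens k S) g -> ideal_gen (mon_gens k G) ('X_[m] * g).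
Proof.
move=> hS [c ->]; apply/idealP => m' hm'.
rewrite mulr_sumr raddf_sum big1 // => i _.
have hi : (i < size (enum S))%N by rewrite -(size_map (fun j => 'X_j : {mpoly k[3]})).
rewrite /= (nth_map ord0) // mulrA [_ * c i]mulrC -mulrA -mpolyXD mcoeffMXs.
case: ifP => // hle; move: hm'; rewrite (inI_mono hle) //.
by apply: hS; rewrite -mem_enum mem_nth.
Qed.
End Mono.


Definition eS (S : ST) : 'X_{1..3} := [multinom ((i \in S) : nat) | i < 3].

Lemma eSE S i : eS S i = (i \in S). Proof. by rewrite mnmE. Qed.

Lemma eS_add (i : 'I_3) (T : ST) : i \notin T -> eS (i |: T) = (eS T + U_(i))%MM.
Proof.
move=> hi; apply/mnmP => j; rewrite mnmDE !mnmE in_setU1 eq_sym.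
by case: (eqVneq i j) => [<-|] /=; rewrite ?(negbTE hi) ?addn0.
Qed.

Lemma lem_subr (m1 m2 a : 'X_{1..3}) : (m2 <= a)%MM -> (m1 <= a - m2)%MM = (m1 + m2 <= a)%MM.
Proof.
move=> /mnm_lepP h; apply/mnm_lepP/mnm_lepP => H j; move: (H j) (h j); rewrite ?mnmDE ?mnmBE.
  by move=> h1 h2; lia.
by move=> h1 h2; lia.
Qed.

Lemma eS_le (S U : ST) : S \subset U -> (eS S <= eS U)%MM.
Proof. by move=> /subsetP h; apply/mnm_lepP => j; rewrite !eSE; case: (boolP (j \in S)) => // /h ->. Qed.

Lemma subm_le (a m1 m2 : 'X_{1..3}) : (m1 <= m2)%MM -> (a - m2 <= a - m1)%MM.
Proof. by move=> /mnm_lepP h; apply/mnm_lepP => j; rewrite !mnmBE leq_sub2l. Qed.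

Section Koszul.
Variable k : fieldType.

Lemma mcoeff_sign n (q : {mpoly k[3]}) m : ((-1) ^+ n * q)@_m = (-1) ^+ n * q@_m.
Proof.
elim: n => [|n IH]; first by rewrite !expr0 !mul1r.
by rewrite !exprS -!mulrA !mulN1r mcoeffN IH.
Qed.

Definition zc (f : chain k) (a : 'X_{1..3}) (V : ST) : k :=
  if (eS V <= a)%MM then (f V)@_(a - eS V) else 0.

Lemma kd_coef (f : chain k) (T : ST) (a : 'X_{1..3}) : (eS T <= a)%MM ->
  (koszul_d f T)@_(a - eS T) = Dg (fun v => zc f a (sset v)) (code T).
Proof.
move=> hT; rewrite -bridgeD ?code_lt // codeK /koszul_d raddf_sum /=.
apply: eq_bigr => i hi.
rewrite -mulrA mcoeff_sign [_ * f _]mulrC mcoeffMXs; congr (_ * _).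
rewrite /zc lem_subr // addmC -eS_add //; case: ifP => // _.
by rewrite submDA -eS_add.
Qed.
End Koszul.


Lemma allbl_mem n (l : seq bool) : size l = n -> l \in allbl n.
Proof.
elim: n l => [|n IH] [|b l] // [hl].
apply: (allpairs_f (fun b l => b :: l)); first by case: b.
exact: IH.
Qed.

Lemma subbP s u : subb s u = (sset s \subset sset u).
Proof.
apply/idP/subsetP.
  move=> h i; rewrite !sset_mem.
  by move/allP: h => /(_ i); rewrite mem_iota ltn_ord => /(_ isT) /implyP.
move=> h; rewrite /subb /=.
have hh : forall i : 'I_3, bit s i ==> bit u i.
  by move=> i; apply/implyP; rewrite -!sset_mem; apply: h.
by rewrite (hh ord0) (hh (lift ord0 ord0)) (hh (lift ord0 (lift ord0 ord0))).
Qed.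

Section Glob.
Variable k : fieldType.
Variable G : seq 'X_{1..3}.
Variable p : nat.
Hypothesis hp : (1 <= p <= 3)%N.

Definition Dla (a : 'X_{1..3}) (S : ST) : bool := (eS S <= a)%MM && ~~ inI G (a - eS S).
Definition Dl (a : 'X_{1..3}) : nat -> bool := nthD (map (fun s => Dla a (sset s)) (iota 0 8)).

Lemma DlE a s : (s < 8)%N -> Dl a s = Dla a (sset s).
Proof. by move=> hs; rewrite /Dl /nthD (nth_map 0%N) ?size_iota // nth_iota. Qed.

Lemma Dl_ge a s : ~~ (s < 8)%N -> Dl a s = false.
Proof. by move=> hs; rewrite /Dl /nthD nth_default // size_map size_iota leqNgt. Qed.

Lemma Dl_lt a s : Dl a s -> (s < 8)%N.
Proof. by apply: contraTT => /Dl_ge ->. Qed.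

Definition Tset (a : 'X_{1..3}) : ST := [set i | (0 < a i)%N].

Lemma Dla_T a S : (eS S <= a)%MM -> S \subset Tset a.
Proof.
move=> /mnm_lepP h; apply/subsetP => i hi; rewrite inE.
by move: (h i); rewrite eSE hi.
Qed.

Lemma Dl_valid a : validc (Dl a).
Proof.
apply/hasP; exists (code (Tset a)); first by rewrite mem_iota code_lt.
apply/andP; split; apply/allP => s; rewrite mem_iota /= => hs.
  apply/implyP; rewrite DlE // subbP codeK => /andP[h _].
  exact: Dla_T.
apply/allP => u; rewrite mem_iota /= => hu.
apply/implyP; rewrite !DlE // !subbP codeK => /andP[/andP[/andP[h1 h2] h3] h4].
apply/andP; split.
  apply/mnm_lepP => i; rewrite eSE; case: (boolP (i \in sset u)) => // hi.
  by move/subsetP: h4 => /(_ i hi); rewrite inE.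
apply: contra h2; apply: inI_mono; apply: subm_le; exact: eS_le.
Qed.

Lemma Dl_ok a : certok (Dl a) p.
Proof.
have := allcheckP; rewrite /allcheck => /allP /(_ (map (fun s => Dla a (sset s)) (iota 0 8))).
rewrite allbl_mem ?size_map ?size_iota // => /(_ isT) /implyP /(_ (Dl_valid a)) /allP; apply.
by move: hp; case: p => [|[|[|[|]]]].
Qed.

Definition Mx (j : 'I_3) : nat := \max_(g <- G) g j.
Definition mk3 (x y z : nat) : 'X_{1..3} := [multinom (nth 0%N [:: x; y; z] i) | i < 3].
Definition box : seq 'X_{1..3} :=
  undup [seq mk3 x yz.1 yz.2 | x <- iota 0 (Mx ord0).+1,
          yz <- [seq (y, z) | y <- iota 0 (Mx (lift ord0 ord0)).+1, z <- iota 0 (Mx (lift ord0 (lift ord0 ord0))).+1]].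

Lemma box_mem (a : 'X_{1..3}) : (forall j, a j <= Mx j)%N -> a \in box.
Proof.
move=> h; rewrite mem_undup.
have -> : a = mk3 (a ord0) (a (lift ord0 ord0)) (a (lift ord0 (lift ord0 ord0))).
  by apply/mnmP; elim/ord3P; rewrite mnmE.
apply/allpairsP; exists (a ord0, (a (lift ord0 ord0), a (lift ord0 (lift ord0 ord0)))).
split=> //; first by rewrite mem_iota /= ltnS h.
by apply: allpairs_f; rewrite mem_iota /= ltnS h.
Qed.

Lemma Mx_ge g j : g \in G -> (g j <= Mx j)%N.
Proof. by move=> hg; rewrite /Mx; apply: leq_bigmax_seq. Qed.

Lemma Dla_cone (a : 'X_{1..3}) (j : 'I_3) (S : ST) : (Mx j < a j)%N -> j \notin S -> Dla a S = Dla a (j |: S).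
Proof.
move=> hj hS; rewrite /Dla eS_add //.
have e1 : (eS S + U_(j) <= a)%MM = (eS S <= a)%MM.
  apply/mnm_lepP/mnm_lepP => h i; move: (h i); rewrite ?mnmDE mnm1E !eSE.
    by move=> /(leq_trans _); apply; apply: leq_addr.
  case: (eqVneq j i) => [<-|_]; last by rewrite addn0.
  by rewrite (negbTE hS) /= => _; lia.
rewrite e1; case: (boolP (eS S <= a)%MM) => //= hle; congr (~~ _).
apply/hasP/hasP => [[g hg hga]|[g hg hga]]; exists g => //; last first.
  by apply/mnm_lepP => i; move/mnm_lepP: hga => /(_ i); rewrite !mnmBE mnmDE; lia.
apply/mnm_lepP => i; move/mnm_lepP: hga => /(_ i); rewrite !mnmBE mnmDE mnm1E !eSE.
case: (eqVneq j i) => [<-|_]; last by rewrite addn0.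
have := Mx_ge j hg; rewrite (negbTE hS) /=; lia.
Qed.

Lemma box_cone (a : 'X_{1..3}) : certB (Dl a) p != [::] -> a \in box.
Proof.
move=> hB; case: (boolP [forall j, a j <= Mx j]%N) => [/forallP h|]; first by apply: box_mem.
rewrite negb_forall => /existsP [j]; rewrite -ltnNge => hj.
case/eqP: hB; apply: (cert_cone (Dl_ok a) (ltn_ord j)) => s hs hb.
have [hs' e] := sset_add hs hb.
by rewrite !DlE // e -Dla_cone // sset_mem.
Qed.

Lemma sum_nth_eq (T : eqType) (L : seq T) x0 (c : 'I_(size L) -> k) (j : 'I_(size L)) :
  uniq L -> \sum_(j' < size L) c j' * (nth x0 L j' == nth x0 L j)%:R = c j.
Proof.
move=> uL; rewrite (bigD1 j) //= eqxx mulr1 big1 ?addr0 // => j' hj'.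
rewrite nth_uniq //; case: (eqVneq (j' : nat) j) => [e|_]; last by rewrite mulr0.
by move: hj'; rewrite (_ : j' = j) ?eqxx //; apply: val_inj.
Qed.

Lemma sum_nth_out (T : eqType) (L : seq T) x0 (c : 'I_(size L) -> k) y :
  y \notin L -> \sum_(j' < size L) c j' * (nth x0 L j' == y)%:R = 0.
Proof.
move=> hy; rewrite big1 // => j _; case: (eqVneq (nth x0 L j) y) => [e|_]; last by rewrite mulr0.
by move: hy; rewrite -e mem_nth.
Qed.

Lemma sum_nth_F (T : eqType) (L : seq T) x0 (F : T -> k) y :
  uniq L -> \sum_(j < size L) F (nth x0 L j) * (nth x0 L j == y)%:R = if y \in L then F y else 0.
Proof.
move=> uL; case: ifP => hy; last by rewrite sum_nth_out ?hy.
have hi : (index y L < size L)%N by rewrite index_mem.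
have := sum_nth_eq x0 (fun j => F (nth x0 L j)) (Ordinal hi) uL.
by rewrite /= nth_index.
Qed.

Definition zr (w : chain k) a s : k := if Dl a s then zc w a (sset s) else 0.

Lemma zc_ext (f : chain k) a t (i : 'I_3) : (t < 8)%N -> ~~ bit t i -> Dla a (sset t) ->
  ~~ Dla a (sset (t + 2 ^ i)) -> zc f a (sset (t + 2 ^ i)) = 0.
Proof.
move=> ht hb /andP[hle hnI]; have [ht' ->] := sset_add ht hb.
rewrite /zc /Dla; case: ifP => //= hle' /negPn hI.
move: hnI; rewrite (inI_mono _ hI) //; apply: subm_le; apply: eS_le; exact: subsetUr.
Qed.

Lemma zc_deg (f : chain k) q a v : chain_deg q f -> (v < 8)%N -> pc v != q -> zc f a (sset v) = 0.
Proof.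
move=> hd hv hpc; rewrite /zc hd ?mcoeff0 ?if_same //.
by rewrite card_sset //; apply/eqP.
Qed.

Lemma zr_supp (w : chain k) a u : chain_deg p w -> (u < 8)%N -> zr w a u != 0 -> Dp (Dl a) p u.
Proof.
move=> hd hu; rewrite /zr /Dp; case: ifP => /= _; last by rewrite eqxx.
by apply: contraR => /(zc_deg a hd hu) ->.
Qed.

Lemma zr_cyc (w : chain k) a t : is_cycle G p w -> (t < 8)%N -> Dp (Dl a) p.-1 t -> Dg (zr w a) t = 0.
Proof.
move=> [hdeg hcyc] ht /andP[hD _]; rewrite DlE // in hD.
have /andP[hle hnI] := hD.
have := kd_coef w hle; rewrite ssetK // ((idealP _ _).1 (hcyc (sset t)) _ hnI) => h0.
rewrite h0; apply: Dg_eq => i hi hb.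
rewrite /zr; case: ifP => // hD'.
have [ht' _] := @sset_add t (Ordinal hi) ht hb.
rewrite DlE // in hD'.
by rewrite (@zc_ext w a t (Ordinal hi)) //= hD'.
Qed.

Lemma Ck_supp a (z : nat -> k) s : (s < 8)%N -> Ck (Dl a) p z s != 0 -> s \in certB (Dl a) p.
Proof.
move=> hs; apply: contraR => hB; rewrite /Ck big1_seq // => u; rewrite mem_iota /= => hu.
case: (eqVneq (cv (Dl a) p 0 s u) 0) => [->|nz]; first by rewrite mul0r.
by move: (cert_C (Dl_ok a) hs hu nz); rewrite (negbTE hB).
Qed.

Lemma Hk_supp a (z : nat -> k) v : (v < 8)%N -> Hk (Dl a) p z v != 0 -> Dp (Dl a) p.+1 v.
Proof.
move=> hv; apply: contraR => hB; rewrite /Hk big1_seq // => u; rewrite mem_iota /= => hu.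
case: (eqVneq (cv (Dl a) p 1 v u) 0) => [->|nz]; first by rewrite mul0r.
by move: (cert_H (Dl_ok a) hv hu nz); rewrite (negbTE hB).
Qed.

Definition L : seq ('X_{1..3} * nat) := undup [seq (a, s) | a <- box, s <- certB (Dl a) p].

Lemma L_uniq : uniq L. Proof. exact: undup_uniq. Qed.

Lemma L_mem x : x \in L -> x.1 \in box /\ x.2 \in certB (Dl x.1) p.
Proof. by rewrite mem_undup => /allpairsPdep [a [s [ha hs ->]]]. Qed.

Lemma L_mem2 a s : a \in box -> s \in certB (Dl a) p -> (a, s) \in L.
Proof. by move=> ha hs; rewrite mem_undup; apply/allpairsPdep; exists a, s. Qed.

Lemma inB a s : s \in certB (Dl a) p ->
  [/\ (s < 8)%N, Dla a (sset s), #|sset s| = p & forall i : 'I_3, bit s i -> ~~ Dla a (sset s :\ i)].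
Proof.
case/(cert_B (Dl_ok a)) => hs /andP[hD hpc] hmin; rewrite -DlE //; split=> //.
  by rewrite card_sset // (eqP hpc).
move=> i hb; have [hs' <-] := sset_sub hs hb.
by rewrite -DlE //; apply: hmin.
Qed.

Definition x0 : 'X_{1..3} * nat := (0%MM, 0%N).
Definition Sf (j : 'I_(size L)) : ST := sset (nth x0 L j).2.
Definition mf (j : 'I_(size L)) : 'X_{1..3} := ((nth x0 L j).1 - eS (Sf j))%MM.

Lemma comb_coef (c : 'I_(size L) -> k) (T : ST) a : (eS T <= a)%MM ->
  (comb Sf mf c T)@_(a - eS T) = \sum_(j < size L) c j * (nth x0 L j == (a, code T))%:R.
Proof.
move=> hT; rewrite /comb raddf_sum; apply: eq_bigr => j _; rewrite /= mcoeffZ; congr (_ * _).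
have hx : nth x0 L j \in L by apply: mem_nth.
have [_ hB] := L_mem hx; have [hs8 /andP[hle _] _ _] := inB hB.
case: (eqVneq T (Sf j)) => [eT|neT].
  subst T; rewrite mcoeffX /mf /Sf ssetK //; congr ((nat_of_bool _)%:R).
  move: hle hT hs8; rewrite /Sf; case: (nth x0 L j) => a' s /= hle hT _.
  rewrite xpair_eqE eqxx andbT.
  apply/idP/idP => /eqP e; apply/eqP; last by rewrite e.
  by rewrite -(submK hle) -(submK hT) e.

rewrite mcoeff0; case: (eqVneq (nth x0 L j) (a, code T)) => [e|]; last by [].
by case/eqP: neT; rewrite /Sf e /= codeK.
Qed.

Lemma chain_deg_comb (c : 'I_(size L) -> k) : chain_deg p (comb Sf mf c).
Proof.
move=> T hT; rewrite /comb big1 // => j _.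
have hx : nth x0 L j \in L by apply: mem_nth.
have [_ hB] := L_mem hx; have [_ _ hc _] := inB hB.
by rewrite ifF ?scaler0 //; apply/negbTE/eqP => e; apply: hT; rewrite e /Sf hc.
Qed.

Lemma prop1 (j : 'I_(size L)) : #|Sf j| = p /\
  forall g, ideal_gen (subset_gens k (Sf j)) g -> ideal_gen (mon_gens k G) ('X_[mf j] * g).
Proof.
have [_ hB] := L_mem (mem_nth x0 (ltn_ord j)); have [hs8 hD hc hmin] := inB hB.
split=> // g; apply: ideal_mul => i hi.
have hb : bit (nth x0 L j).2 i by rewrite -sset_mem.
move: (hmin i hb); rewrite /Dla negb_and negbK.
have /andP[hle _] := hD.
have hle2 : (eS (sset (nth x0 L j).2 :\ i) <= (nth x0 L j).1)%MM.
  by apply: lepm_trans hle; apply: eS_le; apply: subD1set.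
rewrite hle2 /= /mf /Sf.
have ee : eS (sset (nth x0 L j).2) = (eS (sset (nth x0 L j).2 :\ i) + U_(i))%MM.
  by rewrite -eS_add ?setD1K // !inE eqxx.
rewrite ee; apply: inI_mono; apply/mnm_lepP => l.
move/mnm_lepP: hle => /(_ l); rewrite ee !(mnmBE, mnmDE).
move: (eS _ l) (U_(i)%MM l) ((nth x0 L j).1 l) => e u b. lia.
Qed.

Lemma prop2 (c : 'I_(size L) -> k) : is_boundary G p (comb Sf mf c) -> forall j, c j = 0.
Proof.
move=> [_ [g [hgd hg]]] j.
have [hbox hB] := L_mem (mem_nth x0 (ltn_ord j)); have [hs8 hD hc hmin] := inB hB.
set a := (nth x0 L j).1.
pose cl u := \sum_(j' < size L) c j' * (nth x0 L j' == (a, u))%:R.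
pose gl v := if Dp (Dl a) p.+1 v then zc g a (sset v) else 0.
have ex : (a, (nth x0 L j).2) = nth x0 L j by rewrite /a; case: (nth x0 L j).
have hcl : cl (nth x0 L j).2 = c j.
  by rewrite /cl ex; apply: (sum_nth_eq x0 c j L_uniq).
rewrite -hcl.
apply: (local_indep (Dl_ok a) (c := cl) (g := gl)) => //.
- move=> s hs; apply: contraR => hsB; rewrite /cl sum_nth_out //.
  by apply: contra hsB => /L_mem [].
- by move=> v hv; rewrite /gl; case: ifP => // _; rewrite eqxx.
move=> s hs /andP [hDs _]; rewrite DlE // in hDs; have /andP[hle hnI] := hDs.
have := (idealP _ _).1 (hg (sset s)) _ hnI.
rewrite /cl mcoeffB comb_coef // kd_coef // ssetK // => /eqP; rewrite subr_eq0 => /eqP ->.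
apply: Dg_eq => i hi hb.
have [ht' e] := @sset_add s (Ordinal hi) hs hb.
rewrite /gl; case: ifP => // hDp.
case/nandP: (negbT hDp) => [hD'|hpc].
  by rewrite DlE // in hD'; apply: (@zc_ext g a s (Ordinal hi)).
exact: zc_deg hgd ht' hpc.
Qed.

Definition Supp (w : chain k) : seq 'X_{1..3} :=
  undup [seq (m + eS (sset s))%MM | s <- iota 0 8, m <- msupp (w (sset s))].

Lemma zr_Supp w a s : zr w a s != 0 -> a \in Supp w.
Proof.
rewrite /zr; case: ifP => [hD|]; last by rewrite eqxx.
have hs := Dl_lt hD; rewrite DlE // in hD; have /andP[hle _] := hD.
rewrite /zc hle => hnz; rewrite mem_undup; apply/allpairsPdep.
exists s, (a - eS (sset s))%MM; split; first by rewrite mem_iota.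
  by rewrite mcoeff_msupp.
by rewrite submK.
Qed.

Lemma zr0 w a : a \notin Supp w -> forall s, zr w a s = 0.
Proof. by move=> ha s; apply/eqP; apply: contraR ha; apply: zr_Supp. Qed.

Definition gw (w : chain k) : chain k :=
  fun V => \sum_(a <- Supp w) Hk (Dl a) p (zr w a) (code V) *: 'X_[a - eS V].

Lemma gw_deg w : chain_deg p.+1 (gw w).
Proof.
move=> V hV; rewrite /gw big1 // => a _.
case: (eqVneq (Hk (Dl a) p (zr w a) (code V)) 0) => [->|nz]; first by rewrite scale0r.
have /andP[_ hpc] := Hk_supp (code_lt V) nz.
by case: hV; rewrite -(codeK V) card_sset ?code_lt // (eqP hpc).
Qed.

Lemma gw_coef w a v : (v < 8)%N -> zc (gw w) a (sset v) = Hk (Dl a) p (zr w a) v.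
Proof.
move=> hv; rewrite /zc; case: ifP => hle; last first.
  symmetry; apply/eqP; apply: contraFT hle => /(Hk_supp hv) /andP[hD _].
  by rewrite DlE // in hD; case/andP: hD.
rewrite /gw raddf_sum /= ssetK //.
under eq_bigr do rewrite mcoeffZ mcoeffX.
transitivity (\sum_(a' <- Supp w) Hk (Dl a') p (zr w a') v * (a' == a)%:R).
  apply: eq_bigr => a' _.
  case: (eqVneq (Hk (Dl a') p (zr w a') v) 0) => [->|nz]; first by rewrite !mul0r.
  have /andP[hD _] := Hk_supp hv nz; rewrite DlE // in hD; case/andP: hD => hle' _.
  congr (_ * (nat_of_bool _)%:R).
  apply/idP/idP => /eqP e; apply/eqP; last by rewrite e.
  by rewrite -(submK hle') -(submK hle) e.
case: (boolP (a \in Supp w)) => ha.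
  rewrite (bigD1_seq a) ?undup_uniq //= eqxx mulr1 big1 ?addr0 // => a' /negbTE ->.
  by rewrite mulr0.
rewrite big1_seq; last first.
  move=> a' /andP[_ ha']; case: (eqVneq a' a) => [e|]; last by rewrite mulr0.
  by move: ha; rewrite -e ha'.
by rewrite /Hk big1 // => u _; rewrite zr0 // mulr0.
Qed.

Lemma prop3 w : is_cycle G p w -> exists c : 'I_(size L) -> k,
  is_boundary G p (fun T => w T - comb Sf mf c T).
Proof.
move=> hw; have [hwd hwc] := hw.
pose c := fun j : 'I_(size L) => Ck (Dl (nth x0 L j).1) p (zr w (nth x0 L j).1) (nth x0 L j).2.
exists c; split.
  by move=> T hT; rewrite hwd // chain_deg_comb // subr0.
exists (gw w); split; first exact: gw_deg.
move=> T; apply/idealP => m hm.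
set a := (m + eS T)%MM.
have hle : (eS T <= a)%MM by apply: lem_addl.
have ea : (a - eS T)%MM = m by rewrite /a addmK.
have hT8 := code_lt T.
have hDt : Dla a T by rewrite /Dla hle ea hm.
rewrite -ea !mcoeffB comb_coef // kd_coef //.
have hkd : Dg (fun v => zc (gw w) a (sset v)) (code T) = Dg (Hk (Dl a) p (zr w a)) (code T).
  by apply: Dg_eq => i hi hb; rewrite gw_coef // add_lt8.
rewrite hkd.
have hcomb : \sum_(j < size L) c j * (nth x0 L j == (a, code T))%:R = Ck (Dl a) p (zr w a) (code T).
  rewrite (sum_nth_F x0 (fun x => Ck (Dl x.1) p (zr w x.1) x.2)) ?L_uniq //=.
  case: ifP => // hL; apply/esym/eqP; apply: contraFT hL => /(Ck_supp hT8) hB.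
  apply: L_mem2 => //; apply: box_cone; apply/eqP => e; by rewrite e in hB.
rewrite hcomb.
have hw1 : (w T)@_(a - eS T) = zr w a (code T) by rewrite /zr DlE // codeK hDt /zc hle.
rewrite hw1.
case: (eqVneq #|T| p) => hTp; last first.
  have z1 : zr w a (code T) = 0.
    rewrite /zr DlE // codeK hDt /zc hle (hwd T) ?mcoeff0 //; exact/eqP.
  have z2 : Ck (Dl a) p (zr w a) (code T) = 0.
    apply/eqP; apply: contraR hTp => /(Ck_supp hT8) hB.
    by have [_ _ hc _] := inB hB; rewrite codeK in hc; apply/eqP.
  have z3 : Dg (Hk (Dl a) p (zr w a)) (code T) = 0.
    rewrite DgE big1_seq // => i; rewrite mem_iota /= => hi.
    case: ifP => // hb.
    case: (eqVneq (Hk (Dl a) p (zr w a) (code T + 2 ^ i)) 0) => [->|nz]; first by rewrite mulr0.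
    have [ht' e] := @sset_add (code T) (Ordinal hi) hT8 (negbT hb).
    have /andP[_ hpc] := Hk_supp ht' nz.
    move: hpc; rewrite -card_sset // e codeK cardsU1.
    have -> : (Ordinal hi \in T) = false by rewrite -{1}(codeK T) sset_mem hb.
    by rewrite /= add1n eqSS (negbTE hTp).
  by rewrite z1 z2 z3 !subr0.
have hDp : Dp (Dl a) p (code T).
  by rewrite /Dp DlE // codeK hDt /= -card_sset // codeK hTp eqxx.
have span := local_span (Dl_ok a) (z := zr w a) (fun u hu hnz => zr_supp hwd hu hnz)
  (fun t ht hD => zr_cyc hw ht hD) hT8 hDp.
by rewrite {1}span [_ + Dg _ _]addrC addrK subrr.
Qed.
End Glob.

Unset Implicit Arguments.

Theorem mainTheorem5 (k : fieldType) (G : seq 'X_{1..3})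
  (HI0 : exists f : {mpoly k[3]}, ideal_gen (mon_gens k G) f /\ f != 0)
  (HIm2 : forall f : {mpoly k[3]},
     ideal_gen (mon_gens k G) f -> ideal_gen (msq_gens k) f)
  (d : nat) (Hd : is_depth k G d) (p : nat) (Hp : (1 <= p <= 3 - d)%N) :
  exists (n : nat) (S : 'I_n -> {set 'I_3}) (m : 'I_n -> 'X_{1..3}),
    (forall j : 'I_n, #|S j| = p /\
       forall g : {mpoly k[3]}, ideal_gen (subset_gens k (S j)) g ->
         ideal_gen (mon_gens k G) ('X_[m j] * g)) /\
    (forall c : 'I_n -> k, is_boundary G p (comb S m c) -> forall j, c j = 0) /\
    (forall w : chain k, is_cycle G p w ->
       exists c : 'I_n -> k, is_boundary G p (fun T => w T - comb S m c T)).
Proof.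
have hp : (1 <= p <= 3)%N.
  by move: Hp => /andP[-> h]; apply: leq_trans h (leq_subr _ _).
exists (size (L G p)), (@Sf G p), (@mf G p).
split; first by move=> j; apply: (prop1 k hp j).
split; first by move=> c hc j; apply: (prop2 hp hc j).
by move=> w hw; apply: (prop3 hp hw).
Qed.
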